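(* Let $n,k$ be positive integers. If every Latin array of order $n$ contains a partial transversal of length $k$, then every Latin array of order $n+1$ contains a partial transversal of length $k$.
   Context: A Latin array of order $n$ is an $n\times n$ matrix each of whose cells contains a symbol (from an arbitrary set of symbols), such that no symbol occurs more than once in any row or in any column. A partial transversal of length $\ell$ is a set of $\ell$ cells, no two in the same row or column, no two containing the same symbol. *)

(* Defs.v *)
From mathcomp Require Import all_boot.
Set Implicit Arguments. Unset Strict Implicit. Unset Printing Implicit Defensive.

Definition latin_array (S : Type) (n : nat) (L : 'I_n -> 'I_n -> S) : Prop :=
  (forall i j j', L i j = L i j' -> j = j') /\
  (forall i i' j, L i j = L i' j -> i = i').

Definition has_partial_transversal (S : Type) (n l : nat)
    (L : 'I_n -> 'I_n -> S) : Prop :=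
  exists (r c : 'I_l -> 'I_n),
    injective r /\ injective c /\
    (forall a b, L (r a) (c a) = L (r b) (c b) -> a = b).

(* Main.v *)
Require Import Defs.
From mathcomp Require Import all_boot.

Theorem lemma2p1 (n k : nat) (hn : 0 < n) (hk : 0 < k) :
  (forall (S : Type) (L : 'I_n -> 'I_n -> S),
      latin_array L -> has_partial_transversal k L) ->
  forall (S : Type) (L : 'I_n.+1 -> 'I_n.+1 -> S),
      latin_array L -> has_partial_transversal k L.
Proof.
move=> H S L [Hr Hc].
pose w := widen_ord (leqnSn n).
have wi : injective w.
  by move=> x y /(congr1 val) /= /val_inj.
have [r [c [ri [ci hs]]]] : has_partial_transversal k (fun i j => L (w i) (w j)).
  apply: H; split.
  - by move=> i j j' /Hr /wi.
  - by move=> i i' j /Hc /wi.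
exists (fun a => w (r a)), (fun a => w (c a)); split; last split.
- by move=> a b /wi /ri.
- by move=> a b /wi /ci.
- exact: hs.
Qed.
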